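(* Let $n$ be even, let $q\ge2$ be even, $p\ge1$, and let $f:\mathbb{Z}_2^n\to\mathbb{Z}_q$ satisfy $f(x)\equiv\frac q2 a(x)+\sum_{j=0}^{p-1}2^ja_j(x)\pmod q$ for Boolean functions $a,a_0,\dots,a_{p-1}$ on $\mathbb{Z}_2^n$. For $i\in\{0,\dots,2^p-1\}$ let $g_i=a\oplus z_{i,0}a_0\oplus\cdots\oplus z_{i,p-1}a_{p-1}$, and for $u\in\mathbb{Z}_2^n$ let $W(u)=(W_{g_0}(u),\dots,W_{g_{2^p-1}}(u))$. Suppose that every $g_i$ ($i=0,\dots,2^p-1$) is bent, and that for every $u\in\mathbb{Z}_2^n$ there exist $r\in\{0,\dots,2^p-1\}$ and a sign $\epsilon\in\{\pm1\}$ with $W(u)=\epsilon H^{(r)}_{2^p}$ (as vectors). Then $f$ is generalized bent.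
   Context: For $i\in\{0,\dots,2^m-1\}$, $z_i=(z_{i,0},\dots,z_{i,m-1})\in\mathbb{Z}_2^m$ is the binary vector with $i=\sum_j z_{i,j}2^j$. $H_{2^m}$ is the Sylvester–Hadamard matrix with entries $(H_{2^m})_{k,i}=(-1)^{z_k\cdot z_i}$, and $H^{(r)}_{2^m}$ its $r$-th row. $W_g(u)=2^{-n/2}\sum_{x\in\mathbb{Z}_2^n}(-1)^{g(x)\oplus u\cdot x}$; $g$ is bent if $|W_g(u)|=1$ for all $u$. With $\zeta=e^{2\pi\mathrm{i}/q}$, $\mathcal{H}_f(u)=2^{-n/2}\sum_{x}\zeta^{f(x)}(-1)^{u\cdot x}$, and $f$ is generalized bent if $|\mathcal{H}_f(u)|=1$ for all $u\in\mathbb{Z}_2^n$. *)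

(* Defs.v *)
From HB Require Import structures.
From mathcomp Require Import all_boot all_order all_algebra all_field.
Set Implicit Arguments. Unset Strict Implicit. Unset Printing Implicit Defensive.
Import Order.TTheory GRing.Theory Num.Theory.
Local Open Scope ring_scope.

(* Z_2^n, encoded as boolean vectors of length n *)
Definition vec (n : nat) := {ffun 'I_n -> bool}.

Definition dotv (n : nat) (u x : vec n) : bool :=
  \big[addb/false]_(i < n) (u i && x i).

Definition sgnb (b : bool) : algC := (-1) ^+ b.

(* z_{i,j} : j-th binary digit of i *)
Definition zbit (i j : nat) : bool := odd (i %/ 2 ^ j).

Definition walsh (n : nat) (g : vec n -> bool) (u : vec n) : algC :=
  (sqrtC (2%:R ^+ n))^-1 * \sum_(x : vec n) sgnb (g x (+) dotv u x).

Definition bent (n : nat) (g : vec n -> bool) : Prop :=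
  forall u : vec n, `|walsh g u| = 1.

(* zeta = e^{2 pi i / q}; q.-root (-1) is e^{i pi / q} in algC *)
Definition zeta (q : nat) : algC := (q.-root (-1)) ^+ 2.

Definition gwalsh (n q : nat) (f : vec n -> nat) (u : vec n) : algC :=
  (sqrtC (2%:R ^+ n))^-1 * \sum_(x : vec n) zeta q ^+ (f x) * sgnb (dotv u x).

Definition gbent (n q : nat) (f : vec n -> nat) : Prop :=
  forall u : vec n, `|gwalsh q f u| = 1.

(* Sylvester-Hadamard matrix entry (H_{2^m})_{k,i} = (-1)^{z_k . z_i} *)
Definition hadamard (m k i : nat) : algC :=
  sgnb (\big[addb/false]_(j < m) (zbit k j && zbit i j)).

Definition gcomp (n p : nat) (a : vec n -> bool) (aj : 'I_p -> vec n -> bool)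
  (i : nat) (x : vec n) : bool :=
  a x (+) \big[addb/false]_(j < p) (zbit i j && aj j x).

(* Main.v *)
Require Import Defs.
From HB Require Import structures.
From mathcomp Require Import all_boot all_order all_algebra all_field.
From mathcomp Require Import ring.
Import Order.TTheory GRing.Theory Num.Theory.
Local Open Scope ring_scope.

Lemma sum2 (m : nat) (h : nat -> algC) :
  \sum_(i < m.*2) h i = \sum_(k < m) (h k.*2 + h k.*2.+1).
Proof.
elim: m => [|m IH]; first by rewrite !big_ord0.
rewrite doubleS !big_ord_recr /= IH -addrA.
by [].
Qed.

Lemma zbit0 i : zbit i 0 = odd i.
Proof. by rewrite /zbit expn0 divn1. Qed.

Lemma zbitS i j : zbit i j.+1 = zbit i./2 j.
Proof. by rewrite /zbit expnS divnMA divn2. Qed.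

Lemma sumprod (p : nat) (K : 'I_p -> bool -> algC) :
  \sum_(i < 2 ^ p) \prod_(j < p) K j (zbit i j) =
  \prod_(j < p) (K j false + K j true).
Proof.
elim: p K => [|p IH] K.
  by rewrite !big_ord0 big_ord1 big_ord0.
rewrite expnS mul2n (sum2 _ (fun i => \prod_(j < p.+1) K j (zbit i j))).
rewrite big_ord_recl -(IH (fun j => K (lift ord0 j))) mulr_sumr /=.
apply: eq_bigr => k _.
rewrite !big_ord_recl !zbit0 /= odd_double /=.
have h0 : (k.*2)./2 = k by rewrite -[RHS](half_bit_double k false) add0n.
have h1 : (k.*2.+1)./2 = k by exact: uphalf_double.
under eq_bigr => j _ do rewrite /bump add1n zbitS h0.
under [X in _ + _ * X]eq_bigr => j _ do rewrite /bump add1n zbitS h1.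
by rewrite mulrDl.
Qed.

Lemma sgnb_addb b1 b2 : sgnb (b1 (+) b2) = sgnb b1 * sgnb b2.
Proof. by case: b1; case: b2; rewrite /sgnb /= ?expr0 ?expr1 ?mulr1 ?mul1r ?mulrNN ?mulr1. Qed.

Lemma sgnb_big m (F : 'I_m -> bool) :
  sgnb (\big[addb/false]_(j < m) F j) = \prod_(j < m) sgnb (F j).
Proof.
apply: (big_morph sgnb sgnb_addb); by rewrite /sgnb expr0.
Qed.

Lemma zeta_q q : (0 < q)%N -> zeta q ^+ q = 1.
Proof.
move=> q0; rewrite /zeta -exprM mulnC exprM rootCK //.
by rewrite expr2 mulrNN mulr1.
Qed.

Lemma zeta_half q : (0 < q)%N -> ~~ odd q -> zeta q ^+ q./2 = -1.
Proof.
move=> q0 eq; rewrite /zeta -exprM mul2n even_halfK //.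
by rewrite rootCK.
Qed.

Lemma zeta_norm q : (0 < q)%N -> `|zeta q| = 1.
Proof.
move=> q0; apply/eqP; rewrite -(pexpr_eq1 q0) ?normr_ge0 //.
by rewrite -normrX zeta_q // normr1.
Qed.

Lemma two_neq0 : (2%:R : algC) != 0.
Proof. by rewrite pnatr_eq0. Qed.

Definition Kf (w : algC) (c b : bool) : algC :=
  (if b then (1 - w) / 2%:R else (1 + w) / 2%:R) * sgnb (b && c).

Lemma Ksum w c : Kf w c false + Kf w c true = w ^+ c.
Proof.
have h := two_neq0.
rewrite /Kf /sgnb /=; case: c; rewrite /= ?expr0 ?expr1; field => //.
Qed.

Theorem theorem4 (n q p : nat) (f : vec n -> 'Z_q)
  (a : vec n -> bool) (aj : 'I_p -> vec n -> bool) :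
  ~~ odd n -> (2 <= q)%N -> ~~ odd q -> (1 <= p)%N ->
  (forall x : vec n,
     (f x : nat) = (q./2 * a x + \sum_(j < p) 2 ^ j * aj j x)%N %[mod q]) ->
  (forall i : 'I_(2 ^ p), bent (gcomp a aj i)) ->
  (forall u : vec n, exists (r : 'I_(2 ^ p)) (eps : algC),
      (eps = 1 \/ eps = -1) /\
      forall i : 'I_(2 ^ p), walsh (gcomp a aj i) u = eps * hadamard p r i) ->
  gbent q (fun x => (f x : nat)).
Proof.
move=> _ q2 qe _ Hf _ HW u.
have q0 : (0 < q)%N by apply: leq_trans q2.
set z := zeta q.
pose s : algC := (sqrtC (2%:R ^+ n))^-1.
pose w (j : 'I_p) := z ^+ (2 ^ j).
pose C (i : nat) := \prod_(j < p) (if zbit i j then (1 - w j) / 2%:R else (1 + w j) / 2%:R).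
pose P (i : nat) x := \prod_(j < p) sgnb (zbit i j && aj j x).
have stepA : forall x, z ^+ (f x : nat) = sgnb (a x) * \prod_(j < p) w j ^+ aj j x.
  move=> x; rewrite -(expr_mod _ (@zeta_q q q0)) Hf (expr_mod _ (@zeta_q q q0)).
  rewrite exprD exprM zeta_half // expr_sum.
  by congr (_ * _); apply: eq_bigr => j _; rewrite exprM.
have stepB : forall x, \prod_(j < p) w j ^+ aj j x = \sum_(i < 2 ^ p) C i * P i x.
  move=> x.
  rewrite -(eq_bigr _ (fun j _ => Ksum (w j) (aj j x))).
  rewrite -(@sumprod p (fun j b => Kf (w j) (aj j x) b)).
  apply: eq_bigr => i _; rewrite /C /P -big_split /=.
  by apply: eq_bigr => j _; rewrite /Kf.
have stepW : forall i : 'I_(2 ^ p), walsh (gcomp a aj i) u =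
    s * \sum_x sgnb (a x) * P i x * sgnb (dotv u x).
  move=> i; rewrite /walsh; congr (_ * _); apply: eq_bigr => x _.
  by rewrite /gcomp !sgnb_addb sgnb_big.
have E1 : gwalsh q (fun x => (f x : nat)) u = \sum_(i < 2 ^ p) C i * walsh (gcomp a aj i) u.
  rewrite /gwalsh -/z -/s.
  under eq_bigr => x _ do rewrite stepA stepB.
  under [RHS]eq_bigr => i _ do rewrite stepW.
  rewrite mulr_sumr.
  have dist : forall (A D : algC) (B : 'I_(2 ^ p) -> algC),
      s * (A * (\sum_i B i) * D) = \sum_i s * (A * B i * D).
    move=> A D B; rewrite mulr_sumr mulr_suml mulr_sumr.
    by apply: eq_bigr => i _; rewrite mulrA.
  rewrite (eq_bigr _ (fun x _ => dist _ _ _)).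
  rewrite exchange_big /=; apply: eq_bigr => i _.
  rewrite !mulr_sumr; apply: eq_bigr => x _; ring.
have [r [eps [Heps HWr]]] := HW u.
have E2 : gwalsh q (fun x => (f x : nat)) u = eps * \prod_(j < p) w j ^+ zbit r j.
  rewrite E1.
  under eq_bigr => i _ do rewrite HWr mulrCA.
  rewrite -mulr_sumr; congr (_ * _).
  rewrite -(eq_bigr _ (fun j _ => Ksum (w j) (zbit r j))).
  rewrite -(@sumprod p (fun j b => Kf (w j) (zbit r j) b)).
  apply: eq_bigr => i _; rewrite /C /hadamard sgnb_big -big_split /=.
  by apply: eq_bigr => j _; rewrite /Kf andbC.
rewrite E2 normrM normr_prod.
have -> : `|eps| = 1 by case: Heps => ->; rewrite ?normrN normr1.
rewrite mul1r big1 // => j _.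
by rewrite normrX /w normrX zeta_norm // !expr1n.
Qed.
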